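(* Let $G=H\times K$ with $H$ and $K$ nontrivial finite groups. Then $$\mathcal{D}(G)\ge (\mathcal{D}(H)+2)(\mathcal{D}(K)+2)-2,$$ with equality if and only if $H$ and $K$ are both nilpotent and $\gcd(|H|,|K|)=1$.
   Context: $\mathcal{D}(X)$ denotes the number of conjugacy classes of nontrivial subgroups $Y$ of the finite group $X$ with $N_X(Y)\neq Y$. *)

(* Defs.v *)
From mathcomp Require Import all_boot all_fingroup all_solvable.
Set Implicit Arguments. Unset Strict Implicit. Unset Printing Implicit Defensive.
Local Open Scope group_scope.

Definition nsn_subgroups (gT : finGroupType) (G : {set gT}) : {set {set gT}} :=
  [set Y : {set gT} | [&& group_set Y, Y \subset G, Y != 1 & 'N_G(Y) != Y]].

Definition D (gT : finGroupType) (G : {set gT}) : nat :=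
  #|[set Y :^: G | Y in nsn_subgroups G]|.

(* Main.v *)
Require Import Defs.
From mathcomp Require Import all_boot all_fingroup all_solvable.
Local Open Scope group_scope.

Module Aux.
Set Implicit Arguments. Unset Strict Implicit. Unset Printing Implicit Defensive.

Section Gen.
Variable gT : finGroupType.
Implicit Types (A B : {set gT}) (L : {group gT}).

Lemma memJ_self A L : A \in A :^: L.
Proof. by apply/imsetP; exists 1; rewrite ?group1 ?conjsg1. Qed.

Lemma classJ A L x : x \in L -> (A :^ x) :^: L = A :^: L.
Proof. by move=> xL; rewrite conjugates_conj lcoset_id. Qed.

Lemma class_eq_mem A B L : A :^: L = B :^: L -> A \in B :^: L.
Proof. by move=> <-; apply: memJ_self. Qed.

Lemma nsnJ L A x : x \in L -> A \in nsn_subgroups L -> A :^ x \in nsn_subgroups L.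
Proof.
move=> xL; rewrite !inE => /and4P[gA sAL nA1 nN].
apply/and4P; split.
- exact: (groupP ((Group gA) :^ x)%G).
- by rewrite -(conjGid xL) conjSg.
- apply: contra nA1 => /eqP e; apply/eqP.
  by rewrite -(conjsgK x A) e conjs1g.
- apply: contra nN => /eqP e; apply/eqP.
  have eN : 'N_L(A :^ x) = 'N_L(A) :^ x by rewrite conjIg normJ conjGid.
  by apply: (@conjsg_inj _ x); rewrite -eN.
Qed.

Lemma nsnJV L A x : x \in L -> A :^ x \in nsn_subgroups L -> A \in nsn_subgroups L.
Proof. by move=> xL /(nsnJ (groupVr xL)); rewrite conjsgK. Qed.

Definition SS L : {set {set gT}} := nsn_subgroups L :|: [set 1; (L : {set gT})].

Lemma SSP L A : A \in SS L -> [/\ group_set A, A \subset L &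
   [\/ A = 1, A = L | A \in nsn_subgroups L]].
Proof.
case/setUP=> [nA | ].
- by split; [move: nA; rewrite inE => /and4P[] | move: nA; rewrite inE => /and4P[] | apply: Or33].
- rewrite !inE => /orP[/eqP-> | /eqP->].
  + by split; [exact: groupP | exact: sub1G | apply: Or31].
  + by split; [exact: groupP | exact: subxx | apply: Or32].
Qed.

Lemma SSJ L A x : x \in L -> A \in SS L -> A :^ x \in SS L.
Proof.
move=> xL; case/setUP=> [nA | ].
- by apply/setUP; left; apply: nsnJ.
- rewrite !inE => /orP[/eqP-> | /eqP->].
  + by rewrite conjs1g eqxx orbT.
  + by rewrite conjGid // eqxx !orbT.
Qed.

End Gen.

Section Prod.
Variables (gT : finGroupType) (G H K : {group gT}).
Hypothesis hdir : H \x K = G.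

Let defG : H * K = G. Proof. by case/dprodP: hdir. Qed.
Let cHK : K \subset 'C(H). Proof. by case/dprodP: hdir. Qed.
Let tiHK : H :&: K = 1. Proof. by case/dprodP: hdir. Qed.
Let cKH : H \subset 'C(K). Proof. by rewrite centsC. Qed.
Let sHG : H \subset G. Proof. by rewrite -defG mulg_subl. Qed.
Let sKG : K \subset G. Proof. by rewrite -defG mulg_subr. Qed.

Lemma conjH_sub (A : {set gT}) h : A \subset H -> h \in H -> A :^ h \subset H.
Proof. by move=> sAH hH; rewrite -(conjGid hH) conjSg. Qed.
Lemma conjK_sub (A : {set gT}) h : A \subset K -> h \in K -> A :^ h \subset K.
Proof. by move=> sAH hH; rewrite -(conjGid hH) conjSg. Qed.

Lemma conj_prod (A B : {set gT}) h k : A \subset H -> B \subset K ->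
  h \in H -> k \in K -> (A * B) :^ (h * k) = A :^ h * B :^ k.
Proof.
move=> sAH sBK hH kK; rewrite conjsMg !conjsgM.
have -> : (A :^ h) :^ k = A :^ h.
  apply/normP; apply: (subsetP (cent_sub _)).
  apply: (subsetP (centS (conjH_sub sAH hH))); exact: (subsetP cHK).
have -> // : B :^ h = B.
apply/normP; apply: (subsetP (cent_sub _)).
apply: (subsetP (centS sBK)); exact: (subsetP cKH).
Qed.

Lemma setI_prodH (A B : {group gT}) : A \subset H -> B \subset K -> (A * B) :&: H = A.
Proof.
move=> sAH sBK; rewrite -group_modl //.
have -> : B :&: H = 1 by apply/trivgP; rewrite -tiHK setIC setSI.
by rewrite mulg1.
Qed.

Lemma setI_prodK (A B : {group gT}) : A \subset H -> B \subset K -> (A * B) :&: K = B.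
Proof.
move=> sAH sBK; rewrite setIC -group_modr //.
have -> : K :&: A = 1 by apply/trivgP; rewrite -tiHK setIC setIS.
by rewrite mul1g.
Qed.

Lemma prod_group (A B : {group gT}) : A \subset H -> B \subset K -> group_set (A * B).
Proof.
move=> sAH sBK; apply/comm_group_setP; apply: centC.
exact: subset_trans sAH (subset_trans cKH (centS sBK)).
Qed.

Lemma class_prod (A B : {group gT}) : A \subset H -> B \subset K ->
  [set X * Y | X in A :^: H, Y in B :^: K] = (A * B) :^: G.
Proof.
move=> sAH sBK; apply/setP => Z; apply/imset2P/imsetP.
- case=> X Y /imsetP[h hH ->] /imsetP[k kK ->] ->.
  exists (h * k); last by rewrite conj_prod.
  by apply: groupM; [apply: (subsetP sHG) | apply: (subsetP sKG)].
- case=> g gG ->; move: gG; rewrite -defG => /mulsgP[h k hH kK ->].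
  by rewrite conj_prod //; exists (A :^ h) (B :^ k) => //; apply: imset_f.
Qed.

Lemma class_inj (A B A' B' : {group gT}) : A \subset H -> B \subset K ->
  A' \subset H -> B' \subset K ->
  (A * B) :^: G = (A' * B') :^: G -> A :^: H = A' :^: H /\ B :^: K = B' :^: K.
Proof.
move=> sAH sBK sA'H sB'K /class_eq_mem /imsetP[g]; rewrite -defG.
case/mulsgP=> h k hH kK -> e.
rewrite conj_prod // in e.
have sA1 := conjH_sub sA'H hH; have sB1 := conjK_sub sB'K kK.
have eA : A :=: A' :^ h.
  by rewrite -(setI_prodH sAH sBK) e (setI_prodH (A := (A' :^ h)%G) (B := (B' :^ k)%G)).
have eB : B :=: B' :^ k.
  by rewrite -(setI_prodK sAH sBK) e (setI_prodK (A := (A' :^ h)%G) (B := (B' :^ k)%G)).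
by rewrite eA eB !classJ.
Qed.

End Prod.

Section Nil.
Variable gT : finGroupType.

Lemma selfnorm_Sylow p (L P : {group gT}) : p.-Sylow(L) P -> 'N_L('N_L(P)) = 'N_L(P).
Proof.
move=> sylP; set M := 'N_L(P).
have sPM : P \subset M by rewrite subsetI (pHall_sub sylP) normG.
have sylPM : p.-Sylow(M) P := pHall_subl sPM (subsetIl _ _) sylP.
have nMN : M <| 'N_L(M) by rewrite normal_subnorm subsetIl.
have E := Frattini_arg nMN sylPM.
apply/eqP; rewrite eqEsubset; apply/andP; split; last first.
  by rewrite subsetI subsetIl normG.
rewrite -{1}E mul_subG //.
by rewrite /M setSI // subsetIl.
Qed.

Lemma nonnil_selfnorm (L : {group gT}) : ~~ nilpotent L ->
  exists M : {group gT}, M \proper L /\ 'N_L(M) = M.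
Proof.
move=> nnil.
case: (boolP [exists M : {group gT}, (M \proper L) && ('N_L(M) == M)]).
  by case/existsP => M /andP[pM /eqP e]; exists M.
move=> nex; case/negP: nnil.
have nsyl : forall P : {group gT}, Sylow L P -> P <| L.
  move=> P /SylowP[p _ sylP]; have e := selfnorm_Sylow sylP.
  case: (boolP ('N_L(P)%G \proper L)) => pr.
    by case/negP: nex; apply/existsP; exists 'N_L(P)%G; rewrite pr /= e eqxx.
  move: pr; rewrite properEneq subsetIl andbT negbK => /eqP e'.
  by rewrite /normal (pHall_sub sylP) -e' subsetIr.
apply: nilpotentS (Fitting_nil L).
rewrite -{1}(Sylow_gen L) gen_subG; apply/bigcupsP => P sP.
apply: Fitting_max (nsyl P sP) _.
by case/SylowP: sP => p _ /pHall_pgroup; apply: pgroup_nil.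
Qed.

End Nil.

Section Cop.
Variables (gT : finGroupType) (G H K : {group gT}).
Hypothesis hdir : H \x K = G.

Lemma coprime_split (Y : {group gT}) : coprime #|H| #|K| -> Y \subset G ->
  Y :=: (Y :&: H) * (Y :&: K).
Proof.
move=> cop sYG; case/dprodP: hdir => _ defG cHK _.
apply/eqP; rewrite eqEsubset; apply/andP; split; last by rewrite mul_subG ?subsetIl.
apply/subsetP => y yY; have := subsetP sYG y yY; rewrite -defG.
case/mulsgP => h k hH kK ey.
pose pi := \pi(#|H|).
have pih : pi.-elt h := mem_p_elt (pgroup_pi H) hH.
have piK : pi^'.-group K by rewrite /pgroup -coprime_pi' ?cardG_gt0.
have pik : pi^'.-elt k := mem_p_elt piK kK.
have chk : commute h k by apply: commute_sym; apply: (centP (subsetP cHK k kK)).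
have ek : k.`_pi = 1 by apply/constt1P.
have eh : y.`_pi = h by rewrite ey consttM // ek mulg1 constt_p_elt.
have cY : <[y]> \subset Y by rewrite cycle_subG.
have hY : h \in Y by rewrite -eh; apply: (subsetP cY); apply: cycle_constt.
have kY : k \in Y.
  have -> : k = h^-1 * y by rewrite ey mulKg.
  by rewrite groupM ?groupV.
by rewrite ey mem_mulg // inE ?hY ?kY.
Qed.

End Cop.

Lemma nsn_witness (gT : finGroupType) (L : {group gT}) (Y : {set gT}) g :
  group_set Y -> Y \subset L -> Y != 1 -> g \in L -> g \in 'N(Y) -> g \notin Y ->
  Y \in nsn_subgroups L.
Proof.
move=> gY sYL nY1 gL gN gnY; rewrite inE gY sYL nY1 /=.
by apply/eqP => e; move: gnY; rewrite -e inE gL gN.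
Qed.

Section Prod2.
Variables (gT : finGroupType) (G H K : {group gT}).
Hypothesis hdir : H \x K = G.

Let defG : H * K = G. Proof. by case/dprodP: hdir. Qed.
Let cHK : K \subset 'C(H). Proof. by case/dprodP: hdir. Qed.
Let tiHK : H :&: K = 1. Proof. by case/dprodP: hdir. Qed.
Let cKH : H \subset 'C(K). Proof. by rewrite centsC. Qed.
Let sHG : H \subset G. Proof. by rewrite -defG mulg_subl. Qed.
Let sKG : K \subset G. Proof. by rewrite -defG mulg_subr. Qed.

Lemma diag_exists p : prime p -> p %| #|H| -> p %| #|K| ->
  exists Y : {group gT}, [/\ (Y : {set gT}) \in nsn_subgroups G, Y :&: H = 1 & Y :&: K = 1].
Proof.
move=> pp pH pK; have [x xH ox] := Cauchy pp pH; have [y yK oy] := Cauchy pp pK.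
have cxy : commute x y by apply: commute_sym; apply: (centP (subsetP cHK y yK)).
pose z := x * y.
have keyH n : z ^+ n \in H -> x ^+ n = 1 /\ y ^+ n = 1.
  move=> znH; rewrite /z expgMn // in znH.
  have ynH : y ^+ n \in H by rewrite -(mulKg (x ^+ n) (y ^+ n)) groupM ?groupV ?groupX.
  have : y ^+ n \in H :&: K by rewrite inE ynH groupX.
  rewrite tiHK inE => /eqP yn1; split=> //.
  by apply/eqP; rewrite -order_dvdn ox -oy order_dvdn yn1.
have keyK n : z ^+ n \in K -> x ^+ n = 1 /\ y ^+ n = 1.
  move=> znK; rewrite /z expgMn // in znK.
  have xnK : x ^+ n \in K by rewrite -(mulgK (y ^+ n) (x ^+ n)) groupM ?groupV ?groupX.
  have : x ^+ n \in H :&: K by rewrite inE xnK groupX.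
  rewrite tiHK inE => /eqP xn1; split=> //.
  by apply/eqP; rewrite -order_dvdn oy -ox order_dvdn xn1.
have x1 : x != 1.
  apply/eqP => ex1. move: pp. rewrite -ox ex1 order1. by [].
have zG : z \in G by apply: groupM; [apply: (subsetP sHG) | apply: (subsetP sKG)].
exists <[z]>%G; split.
- apply: (@nsn_witness _ G _ x).
  + exact: groupP <[z]>%G.
  + by rewrite cycle_subG.
  + apply/eqP => e; have : z \in <[z]> := cycle_id z.
    rewrite e inE => /eqP z1; have [] := keyH 1%N; first by rewrite expg1 z1 group1.
    by rewrite expg1 => x1'; rewrite x1' eqxx in x1.
  + exact: (subsetP sHG).
  + apply: (subsetP (cent_sub _)); rewrite cent_cycle; apply/cent1P.
    exact: commuteM.
  + apply/negP => /cycleP[i ei].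
    have [xi yi] : x ^+ i = 1 /\ y ^+ i = 1 by apply: keyH; rewrite -ei.
    by move: x1; rewrite ei /z expgMn // xi yi mulg1 eqxx.
- apply/trivgP/subsetP => w /setIP[/cycleP[i ->] wH].
  have [xi yi] := keyH i wH.
  by rewrite inE /z expgMn // xi yi mulg1.
- apply/trivgP/subsetP => w /setIP[/cycleP[i ->] wK].
  have [xi yi] := keyK i wK.
  by rewrite inE /z expgMn // xi yi mulg1.
Qed.

End Prod2.

Section Gen2.
Variable gT : finGroupType.
Implicit Types (A B : {set gT}) (L : {group gT}).

Lemma mem_cls1 L A : A \in 1 :^: L -> A = 1.
Proof. by case/imsetP => x _ ->; rewrite conjs1g. Qed.

Lemma mem_clsT L A : A \in (L : {set gT}) :^: L -> A = L.
Proof. by case/imsetP => x xL ->; rewrite conjGid. Qed.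

Lemma top_nsn L : (L : {set gT}) \notin nsn_subgroups L.
Proof.
by rewrite inE; apply/negP => /and4P[_ _ _]; rewrite (setIidPl (normG L)) eqxx.
Qed.

Lemma one_nsn L : (1 : {set gT}) \notin nsn_subgroups L.
Proof. by rewrite inE eqxx /= !andbF. Qed.

Lemma one_SS L : (1 : {set gT}) \in SS L.
Proof. by rewrite /SS !inE eqxx orbT. Qed.

Lemma top_SS L : (L : {set gT}) \in SS L.
Proof. by rewrite /SS !inE eqxx !orbT. Qed.

Lemma cls1T L : L :!=: 1 -> 1 :^: L != (L : {set gT}) :^: L.
Proof.
move=> nL; apply/eqP => e; have := memJ_self (L : {set gT}) L.
by rewrite -e => /mem_cls1 eL; rewrite eL eqxx in nL.
Qed.

Lemma cardP L : L :!=: 1 -> #|[set Y :^: L | Y in SS L]| = (D L + 2)%N.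
Proof.
move=> nL; rewrite /SS imsetU imsetU1 imset_set1.
rewrite setUC -setUA cardsU1 cardsU1.
have h1 : 1 :^: L \notin [set Y :^: L | Y in nsn_subgroups L].
  apply/imsetP => [[Y nY e]]; have := class_eq_mem (esym e).
  by move/mem_cls1 => eY; rewrite eY (negbTE (one_nsn L)) in nY.
have h2 : (L : {set gT}) :^: L \notin [set Y :^: L | Y in nsn_subgroups L].
  apply/imsetP => [[Y nY e]]; have := class_eq_mem (esym e).
  by move/mem_clsT => eY; rewrite eY (negbTE (top_nsn L)) in nY.
rewrite h2 !inE negb_or h1 andbT (cls1T nL) /D.
by rewrite /= add1n add1n addn2.
Qed.

Lemma nil_SS L (A : {group gT}) : nilpotent L -> A \subset L -> (A : {set gT}) \in SS L.
Proof.
move=> nilL sAL; case: (eqVneq (A : {set gT}) L) => [-> | neAL]; first exact: top_SS.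
case: (eqVneq (A : {set gT}) 1) => [-> | neA1]; first exact: one_SS.
apply/setUP; left; rewrite inE (groupP A) sAL neA1 /=.
have pA : A \proper L by rewrite properEneq neAL sAL.
have := nilpotent_proper_norm nilL pA.
by rewrite properEneq eq_sym => /andP[].
Qed.

Lemma SS_witness L A : A \in SS L -> A != L -> L :!=: 1 ->
  exists2 h, h \in 'N_L(A) & h \notin A.
Proof.
move=> sA neAL nL; have [gA sAL] := SSP sA; case.
- move=> ->; have [h hL h1] := trivgPn _ nL; exists h; last by rewrite inE.
  by rewrite inE hL norm1 inE.
- by move=> eAL; rewrite eAL eqxx in neAL.
- rewrite inE => /and4P[_ _ _ nN].
  apply/subsetPn; apply: contra nN => sub.
  by rewrite eqEsubset sub subsetI sAL (normG (Group gA)).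
Qed.

End Gen2.

Section Main.
Variables (gT : finGroupType) (G H K : {group gT}).
Hypothesis hdir : H \x K = G.
Hypotheses (hH : H :!=: 1) (hK : K :!=: 1).

Let defG : H * K = G. Proof. by case/dprodP: hdir. Qed.
Let cHK : K \subset 'C(H). Proof. by case/dprodP: hdir. Qed.
Let tiHK : H :&: K = 1. Proof. by case/dprodP: hdir. Qed.
Let cKH : H \subset 'C(K). Proof. by rewrite centsC. Qed.
Let sHG : H \subset G. Proof. by rewrite -defG mulg_subl. Qed.
Let sKG : K \subset G. Proof. by rewrite -defG mulg_subr. Qed.

Definition PH := [set Y :^: H | Y in SS H].
Definition PK := [set Y :^: K | Y in SS K].
Definition e1 := ((1 : {set gT}) :^: H, (1 : {set gT}) :^: K).
Definition e2 := ((H : {set gT}) :^: H, (K : {set gT}) :^: K).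
Definition Dom := setX PH PK :\: [set e1; e2].
Definition ff (p : {set {set gT}} * {set {set gT}}) := [set X * Y | X in p.1, Y in p.2].
Definition ClsG := [set Y :^: G | Y in nsn_subgroups G].

Lemma domP p : p \in Dom -> exists A B : {group gT},
  [/\ p = ((A : {set gT}) :^: H, (B : {set gT}) :^: K), (A : {set gT}) \in SS H,
      (B : {set gT}) \in SS K, ~~ ((A == 1 :> {set gT}) && (B == 1 :> {set gT}))
    & ~~ ((A == H :> {set gT}) && (B == K :> {set gT}))].
Proof.
case: p => X1 X2; rewrite !inE /= => /andP[ne /andP[/imsetP[A sA eA] /imsetP[B sB eB]]].
have [gA _ _] := SSP sA; have [gB _ _] := SSP sB.
exists (Group gA), (Group gB); split => //=; first by rewrite eA eB.
- apply: contra ne => /andP[/eqP eA1 /eqP eB1].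
  by rewrite eA eB eA1 eB1 /e1 eqxx.
- apply: contra ne => /andP[/eqP eA1 /eqP eB1].
  by rewrite eA eB eA1 eB1 /e2 eqxx orbT.
Qed.


Lemma memDom (A B : {group gT}) : (A : {set gT}) \in SS H -> (B : {set gT}) \in SS K ->
  ~~ ((A == 1 :> {set gT}) && (B == 1 :> {set gT})) ->
  ~~ ((A == H :> {set gT}) && (B == K :> {set gT})) ->
  ((A : {set gT}) :^: H, (B : {set gT}) :^: K) \in Dom.
Proof.
move=> sA sB n1 n2; rewrite !inE /= /PH /PK (imset_f (fun Y => Y :^: H) sA) (imset_f (fun Y => Y :^: K) sB) andbT /e1 /e2 !xpair_eqE.
rewrite andbT; apply/negP; case/orP => /andP[/eqP c1 /eqP c2].
- move/class_eq_mem/mem_cls1: c1 => a1; move/class_eq_mem/mem_cls1: c2 => b1.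
  by rewrite a1 b1 eqxx in n1.
- move/class_eq_mem/mem_clsT: c1 => a1; move/class_eq_mem/mem_clsT: c2 => b1.
  by rewrite a1 b1 !eqxx in n2.
Qed.

Lemma f_cls (A B : {group gT}) : A \subset H -> B \subset K ->
  ff ((A : {set gT}) :^: H, (B : {set gT}) :^: K) = (A * B) :^: G.
Proof. by move=> sAH sBK; rewrite /ff /=; apply: class_prod. Qed.

Lemma nsnAB (A B : {group gT}) : (A : {set gT}) \in SS H -> (B : {set gT}) \in SS K ->
  ~~ ((A == 1 :> {set gT}) && (B == 1 :> {set gT})) ->
  ~~ ((A == H :> {set gT}) && (B == K :> {set gT})) ->
  A * B \in nsn_subgroups G.
Proof.
move=> sA sB n1 n2; have [_ sAH _] := SSP sA; have [_ sBK _] := SSP sB.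
have [g [gG gN gn]] : exists g, [/\ g \in G, g \in 'N(A * B) & g \notin A * B].
  case: (eqVneq (A : {set gT}) H) => [eAH | neAH].
  - have neBK : (B : {set gT}) != K by move: n2; rewrite eAH eqxx.
    have [k /setIP[kK kN] kB] := SS_witness sB neBK hK.
    exists k; split; first exact: (subsetP sKG).
    + apply/normP; rewrite conjsMg (normP kN).
      have -> // : A :^ k = A.
      apply/normP; apply: (subsetP (cent_sub _)).
      apply: (subsetP (centS sAH)); exact: (subsetP cHK).
    + apply: contra kB => kAB.
      by rewrite -(setI_prodK hdir sAH sBK) inE kAB kK.
  - have [h /setIP[hH' hN] hA] := SS_witness sA neAH hH.
    exists h; split; first exact: (subsetP sHG).
    + apply/normP; rewrite conjsMg (normP hN).
      have -> // : B :^ h = B.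
      apply/normP; apply: (subsetP (cent_sub _)).
      apply: (subsetP (centS sBK)); exact: (subsetP cKH).
    + apply: contra hA => hAB.
      by rewrite -(setI_prodH hdir sAH sBK) inE hAB hH'.
apply: (nsn_witness (prod_group hdir sAH sBK) _ _ gG gN gn).
- by rewrite -defG mulgSS.
- apply: contra n1 => /eqP e; apply/andP; split; apply/eqP/trivgP; rewrite -e.
  + exact: mulg_subl.
  + exact: mulg_subr.
Qed.

Lemma ff_inj : {in Dom &, injective ff}.
Proof.
move=> p q /domP[A [B [-> sA sB _ _]]] /domP[A' [B' [-> sA' sB' _ _]]].
have [_ sAH _] := SSP sA; have [_ sBK _] := SSP sB.
have [_ sA'H _] := SSP sA'; have [_ sB'K _] := SSP sB'.
rewrite !f_cls // => /(class_inj hdir sAH sBK sA'H sB'K) [-> ->] //.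
Qed.

Lemma img_sub : ff @: Dom \subset ClsG.
Proof.
apply/subsetP => _ /imsetP[p /domP[A [B [-> sA sB n1 n2]]] ->].
have [_ sAH _] := SSP sA; have [_ sBK _] := SSP sB.
rewrite f_cls //; apply: imset_f; exact: nsnAB.
Qed.

Lemma card_Dom : #|Dom| = ((D H + 2) * (D K + 2) - 2)%N.
Proof.
have sub12 : [set e1; e2] \subset setX PH PK.
  apply/subsetP => p; rewrite !inE => /orP[/eqP-> | /eqP->].
  - by rewrite /e1 /= /PH /PK (imset_f (fun Y => Y :^: H) (one_SS H)) (imset_f (fun Y => Y :^: K) (one_SS K)).
  - by rewrite /e2 /= /PH /PK (imset_f (fun Y => Y :^: H) (top_SS H)) (imset_f (fun Y => Y :^: K) (top_SS K)).
rewrite cardsD (setIidPr sub12) cardsX cards2 /e1 /e2.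
rewrite xpair_eqE (negbTE (cls1T hH)) /= /PH /PK !cardP //.
Qed.

Lemma imgP (Y : {group gT}) : (Y : {set gT}) :^: G \in ff @: Dom ->
  exists A B : {group gT}, [/\ (A : {set gT}) \in SS H, (B : {set gT}) \in SS K,
     Y :=: A * B, Y :&: H = A & Y :&: K = B].
Proof.
case/imsetP => p /domP[A [B [-> sA sB _ _]]].
have [_ sAH _] := SSP sA; have [_ sBK _] := SSP sB.
rewrite f_cls // => /class_eq_mem /imsetP[g]; rewrite -defG.
case/mulsgP => h k hH' kK -> eY; rewrite (conj_prod hdir) // in eY.
have sA1 := conjH_sub sAH hH'; have sB1 := conjK_sub sBK kK.
exists (A :^ h)%G, (B :^ k)%G; split.
- exact: SSJ.
- exact: SSJ.
- exact: eY.
- by rewrite eY (setI_prodH hdir (A := (A :^ h)%G) (B := (B :^ k)%G)).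
- by rewrite eY (setI_prodK hdir (A := (A :^ h)%G) (B := (B :^ k)%G)).
Qed.

Lemma main_res : ((D H + 2) * (D K + 2) - 2 <= D G)%N /\
  (D G = ((D H + 2) * (D K + 2) - 2)%N <->
     [/\ nilpotent H, nilpotent K & coprime #|H| #|K|]).
Proof.
have cImg : #|ff @: Dom| = ((D H + 2) * (D K + 2) - 2)%N.
  by rewrite card_in_imset ?card_Dom //; exact: ff_inj.
have DG : D G = #|ClsG| by [].
have le1 : ((D H + 2) * (D K + 2) - 2 <= D G)%N.
  by rewrite DG -cImg subset_leq_card // img_sub.
split => //; split.
- move=> eq.
  have eImg : ff @: Dom = ClsG.
    by apply/eqP; rewrite eqEcard img_sub /= -DG eq cImg leqnn.
  have inImg : forall Y : {group gT}, (Y : {set gT}) \in nsn_subgroups G ->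
      (Y : {set gT}) :^: G \in ff @: Dom.
    by move=> Y nY; rewrite eImg; apply: (imset_f (fun Y => Y :^: G) nY).
  have nilH : nilpotent H.
    apply/idPn => nn; have [M [pM eM]] := nonnil_selfnorm nn.
    have sMH : M \subset H := proper_sub pM.
    have M1 : (M : {set gT}) != 1.
      apply/eqP => M1; move: eM; rewrite M1 norm1 setIT => eH1.
      by move: hH; rewrite eH1 eqxx.
    have [k kK k1] := trivgPn _ hK.
    have nM : (M : {set gT}) \in nsn_subgroups G.
      apply: (nsn_witness (groupP M) (subset_trans sMH sHG) M1 (subsetP sKG k kK)).
      + apply: (subsetP (cent_sub _)); apply: (subsetP (centS sMH)); exact: (subsetP cHK).
      + apply: contra k1 => kM; have : k \in H :&: K by rewrite inE (subsetP sMH) // kK.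
        by rewrite tiHK inE.
    have [A [B [sA sB eMAB eA eB]]] := imgP (inImg M nM).
    have eMA : (M : {set gT}) = A by rewrite -eA (setIidPl sMH).
    rewrite -eMA in sA; case: (SSP sA) => _ _ [M1' | MH | nMH].
    + by rewrite M1' eqxx in M1.
    + by move: pM; rewrite MH properxx.
    + by move: nMH; rewrite inE eM eqxx !andbF.
  have nilK : nilpotent K.
    apply/idPn => nn; have [M [pM eM]] := nonnil_selfnorm nn.
    have sMK : M \subset K := proper_sub pM.
    have M1 : (M : {set gT}) != 1.
      apply/eqP => M1; move: eM; rewrite M1 norm1 setIT => eK1.
      by move: hK; rewrite eK1 eqxx.
    have [h hH' h1] := trivgPn _ hH.
    have nM : (M : {set gT}) \in nsn_subgroups G.
      apply: (nsn_witness (groupP M) (subset_trans sMK sKG) M1 (subsetP sHG h hH')).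
      + apply: (subsetP (cent_sub _)); apply: (subsetP (centS sMK)); exact: (subsetP cKH).
      + apply: contra h1 => hM; have : h \in H :&: K by rewrite inE (subsetP sMK) // hH'.
        by rewrite tiHK inE.
    have [A [B [sA sB eMAB eA eB]]] := imgP (inImg M nM).
    have eMB : (M : {set gT}) = B by rewrite -eB (setIidPl sMK).
    rewrite -eMB in sB; case: (SSP sB) => _ _ [M1' | MK | nMK].
    + by rewrite M1' eqxx in M1.
    + by move: pM; rewrite MK properxx.
    + by move: nMK; rewrite inE eM eqxx !andbF.
  split=> //; apply/idPn => ncop.
  have n1 : (1 < gcdn #|H| #|K|)%N.
    by rewrite ltn_neqAle eq_sym ncop gcdn_gt0 cardG_gt0.
  have pp := pdiv_prime n1.
  have pH := dvdn_trans (pdiv_dvd _) (dvdn_gcdl #|H| #|K|).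
  have pK := dvdn_trans (pdiv_dvd _) (dvdn_gcdr #|H| #|K|).
  have [Y [nY YH YK]] := diag_exists hdir pp pH pK.
  have [A [B [sA sB eY eA eB]]] := imgP (inImg Y nY).
  move: nY; rewrite inE => /and4P[_ _ Y1 _].
  by rewrite eY -eA -eB YH YK mulg1 eqxx in Y1.
- case => nilH nilK cop.
  apply/eqP; rewrite eqn_leq le1 andbT DG -cImg subset_leq_card //.
  apply/subsetP => _ /imsetP[Y nY ->].
  have nY' := nY; move: nY'; rewrite inE => /and4P[gY sYG Y1 NY].
  pose Yg := Group gY.
  have eY := coprime_split hdir (Y := Yg) cop sYG.
  pose A := (Yg :&: H)%G; pose B := (Yg :&: K)%G.
  have sA : (A : {set gT}) \in SS H := nil_SS nilH (subsetIr _ _).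
  have sB : (B : {set gT}) \in SS K := nil_SS nilK (subsetIr _ _).
  have n1 : ~~ ((A == 1 :> {set gT}) && (B == 1 :> {set gT})).
    apply/negP => /andP[/eqP a1 /eqP b1]; move: Y1.
    by rewrite [Y]eY /= -/A -/B a1 b1 mulg1 eqxx.
  have n2 : ~~ ((A == H :> {set gT}) && (B == K :> {set gT})).
    apply/negP => /andP[/eqP a1 /eqP b1]; move: nY.
    by rewrite [Y]eY /= -/A -/B a1 b1 defG (negbTE (top_nsn G)).
  apply/imsetP; exists ((A : {set gT}) :^: H, (B : {set gT}) :^: K); first exact: memDom.
  by rewrite f_cls ?subsetIr //; congr (_ :^: G); exact: eY.
Qed.

End Main.

End Aux.

Theorem mainTheorem6 (gT : finGroupType) (G H K : {group gT})
  (hdir : H \x K = G) (hH : H :!=: 1) (hK : K :!=: 1) :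
  ((D H + 2) * (D K + 2) - 2 <= D G)%N /\
  (D G = ((D H + 2) * (D K + 2) - 2)%N <->
     [/\ nilpotent H, nilpotent K & coprime #|H| #|K|]).
Proof. exact: (Aux.main_res hdir hH hK). Qed.
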